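(* For every $k\geq 2$, there exists a pair of $2k$-regular graphs that are cospectral with respect to the adjacency matrix and have different zero forcing numbers.
   Context: Graphs are finite, simple, undirected. The zero forcing number $Z(G)$ is the minimum size of a set $S\subseteq V(G)$ such that, if the vertices of $S$ are colored blue and all others white, repeated application of the rule ''a blue vertex with exactly one white neighbor forces that neighbor to become blue'' eventually makes every vertex blue. *)

(* Defs.v *)
From mathcomp Require Import all_boot all_order all_algebra.
Set Implicit Arguments. Unset Strict Implicit. Unset Printing Implicit Defensive.
Import GRing.Theory.

Definition simple_graph (T : finType) (e : rel T) : Prop :=
  symmetric e /\ irreflexive e.

Definition nbhd (T : finType) (e : rel T) (v : T) : {set T} := [set w | e v w].

Definition regular (T : finType) (d : nat) (e : rel T) : Prop :=
  forall v : T, #|nbhd e v| = d.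

Definition adj_mx (n : nat) (e : rel 'I_n) : 'M[int]_n :=
  \matrix_(i < n, j < n) (e i j)%:R%R.

Definition cospectral (n : nat) (e1 e2 : rel 'I_n) : Prop :=
  char_poly (adj_mx e1) = char_poly (adj_mx e2).

Definition force_step (T : finType) (e : rel T) (B : {set T}) : {set T} :=
  B :|: [set w | [exists u in B, e u w &&
          [forall x, (e u x && (x != w)) ==> (x \in B)]]].

(* Final blue set obtained from S by repeatedly applying the rule (the rule
   is monotone, so #|T| rounds reach the fixpoint). *)
Definition zf_closure (T : finType) (e : rel T) (S : {set T}) : {set T} :=
  iter #|T| (force_step e) S.

Definition zero_forcing_set (T : finType) (e : rel T) (S : {set T}) : bool :=
  zf_closure e S == [set: T].

(* Zero forcing number: minimum size of a zero forcing set
   ([set: T] is always a zero forcing set). *)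
Definition zero_forcing_number (T : finType) (e : rel T) : nat :=
  #|[arg min_(S < [set: T] | zero_forcing_set e S) #|S|]|.

(* Main.v *)
Require Import Defs.
From mathcomp Require Import all_boot all_order all_algebra.
From mathcomp Require Import zify ring.
Set Implicit Arguments. Unset Strict Implicit. Unset Printing Implicit Defensive.

Section Forcing.
Variables (T : finType) (e : rel T).

Lemma fs_ext (B : {set T}) : B \subset force_step e B.
Proof. exact: subsetUl. Qed.

Lemma fs_mono (A B : {set T}) : A \subset B -> force_step e A \subset force_step e B.
Proof.
move=> sAB; apply/subsetP => w; rewrite !inE => /orP [wA | ].
  by rewrite (subsetP sAB w wA).
case/existsP => u /andP [uA /andP [euw /forallP H]].
apply/orP; right; apply/existsP; exists u.
rewrite (subsetP sAB u uA) euw /=; apply/forallP => x.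
by apply/implyP => hx; apply: (subsetP sAB); move/implyP: (H x); apply.
Qed.

Lemma iter_fs_mono n (A B : {set T}) : A \subset B ->
  iter n (force_step e) A \subset iter n (force_step e) B.
Proof. by move=> sAB; elim: n => //= n IH; apply: fs_mono. Qed.

Lemma iter_fs_grow m n (B : {set T}) : m <= n ->
  iter m (force_step e) B \subset iter n (force_step e) B.
Proof.
move=> /subnK <-; elim: (n - m) => [|k IH]; first by rewrite add0n.
by rewrite addSn /=; apply: subset_trans IH (fs_ext _).
Qed.

Lemma iter_fs_closed n (B C : {set T}) : B \subset C -> force_step e C \subset C ->
  iter n (force_step e) B \subset C.
Proof.
move=> sBC fC; elim: n => //= n IH.
by apply: subset_trans fC; apply: fs_mono.
Qed.

Lemma zfsT : zero_forcing_set e [set: T].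
Proof.
rewrite /zero_forcing_set /zf_closure eqEsubset subsetT /=.
by apply: iter_fs_grow (leq0n _).
Qed.

Lemma zfn_le (S : {set T}) : zero_forcing_set e S -> zero_forcing_number e <= #|S|.
Proof.
move=> zS; rewrite /zero_forcing_number.
by case: (arg_minnP (fun S : {set T} => #|S|) zfsT) => A _; apply.
Qed.

Lemma zfn_gt d : (forall S : {set T}, zero_forcing_set e S -> d < #|S|) ->
  d < zero_forcing_number e.
Proof.
move=> H; rewrite /zero_forcing_number.
by case: (arg_minnP (fun S : {set T} => #|S|) zfsT) => A zA _; apply: H.
Qed.

Lemma lb_forcing d : simple_graph e -> regular d e -> d < #|T| ->
  (forall u, exists2 B : {set T}, (u |: nbhd e u) \subset B &
       (force_step e B \subset B) /\ B != setT) ->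
  forall S : {set T}, zero_forcing_set e S -> d < #|S|.
Proof.
move=> [esym eirr] reg dT HB S zS; rewrite ltnNge; apply/negP => Sd.
suff [B sSB [fB BT]] : exists2 B : {set T}, S \subset B & force_step e B \subset B /\ B != setT.
  move: zS; rewrite /zero_forcing_set /zf_closure => /eqP zS.
  have := iter_fs_closed #|T| sSB fB; rewrite zS => sTB.
  by move: BT; rewrite eqEsubset subsetT sTB.
case: (boolP (force_step e S \subset S)) => [fS | /subsetPn [w wF wS]].
  exists S => //; split => //; apply/negP => /eqP ST.
  by move: Sd; rewrite ST cardsT leqNgt dT.
move: wF; rewrite !inE (negbTE wS) /= => /existsP [u /andP [uS /andP [euw /forallP H]]].
have [B sB fB] := HB u; exists B => //.
have sX : u |: (nbhd e u :\ w) \subset S.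
  apply/subsetP => x; rewrite !inE => /orP [/eqP -> // | /andP [xw eux]].
  by move/implyP: (H x); apply; rewrite eux xw.
have cX : #|u |: (nbhd e u :\ w)| = d.
  have wN : w \in nbhd e u by rewrite /nbhd inE.
  have := cardsD1 w (nbhd e u); rewrite wN reg add1n => ->.
  by rewrite cardsU1 !inE eirr andbF.
have eS : u |: (nbhd e u :\ w) = S.
  by apply/eqP; rewrite eqEcard sX cX Sd.
apply: subset_trans sB; rewrite -eS; apply/subsetP => x; rewrite !inE.
by case/orP => [-> // | /andP [_ ->]]; rewrite orbT.
Qed.

End Forcing.

Lemma existsI N (P : nat -> bool) : [exists u : 'I_N, P u] = has P (iota 0 N).
Proof.
apply/existsP/hasP => [[u Pu] | [x]]; first by exists (val u); rewrite // mem_iota ltn_ord.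
by rewrite mem_iota add0n => /andP [_ xN] Px; exists (Ordinal xN).
Qed.

Lemma forallI N (P : nat -> bool) : [forall u : 'I_N, P u] = all P (iota 0 N).
Proof.
apply/forallP/allP => [H x | H u]; last by apply: H; rewrite mem_iota ltn_ord.
by rewrite mem_iota add0n => /andP [_ xN]; exact: (H (Ordinal xN)).
Qed.

Lemma cardI N (P : nat -> bool) : #|[set u : 'I_N | P u]| = count P (iota 0 N).
Proof.
rewrite -sum1_card -sum1_count.
rewrite (eq_bigl (fun u : 'I_N => P u)); last by move=> u; rewrite inE.
by rewrite -(big_mkord P (fun _ => 1)) /index_iota subn0.
Qed.

Lemma sumI N (F : nat -> nat) : \sum_(l < N) F l = sumn [seq F l | l <- iota 0 N].
Proof.
by rewrite -(big_mkord xpredT F) /index_iota subn0 sumnE big_map.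
Qed.

Definition grel N (gn : nat -> nat -> bool) : rel 'I_N := fun a c => gn a c.
Definition toset N (bs : seq bool) : {set 'I_N} := [set x : 'I_N | nth false bs x].
Definition fsb (N : nat) (gn : nat -> nat -> bool) (bs : seq bool) : seq bool :=
  [seq nth false bs w || has (fun u => nth false bs u && gn u w &&
        all (fun x => ~~ (gn u x && (x != w)) || nth false bs x) (iota 0 N)) (iota 0 N)
  | w <- iota 0 N].
Arguments grel : clear implicits.
Arguments toset : clear implicits.
Arguments fsb : clear implicits.

Lemma fsb_ok N gn bs : force_step (grel N gn) (toset N bs) = toset N (fsb N gn bs).
Proof.
apply/setP => w; rewrite !inE /fsb (nth_map 0) ?size_iota // nth_iota // add0n.
congr (_ || _).
rewrite -existsI; apply: eq_existsb => u; rewrite !inE /grel -andbA; congr (_ && (_ && _)).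
rewrite -forallI; apply: eq_forallb => x; rewrite inE.
by rewrite implybE.
Qed.

Lemma iter_fsb N gn bs m :
  iter m (force_step (grel N gn)) (toset N bs) = toset N (iter m (fsb N gn) bs).
Proof. by elim: m => //= m ->; rewrite fsb_ok. Qed.

Lemma third (b x y : nat) : 2 < b -> exists2 j, j < b & (j != x %% b) && (j != y %% b).
Proof.
move=> b2.
case: (boolP ((x %% b != 0) && (y %% b != 0))) => [h|h]; first by exists 0 => //; lia.
case: (boolP ((x %% b != 1) && (y %% b != 1))) => [h1|h1]; first by exists 1 => //; lia.
exists 2 => //; move: h h1; rewrite !negb_and !negbK; lia.
Qed.

Section Join.
Variables (N b p : nat) (g : rel 'I_N).

Definition fill : rel 'I_(b * p) := fun a c => a %/ b != c %/ b.

Definition jrel : rel 'I_(N + b * p) := fun u v =>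
  match split u, split v with
  | inl a, inl c => g a c
  | inr a, inr c => fill a c
  | _, _ => true
  end.

Definition lft (a : 'I_N) : 'I_(N + b * p) := lshift (b * p) a.
Definition rgt (c : 'I_(b * p)) : 'I_(N + b * p) := rshift N c.

Lemma split_l a : split (lft a) = inl a. Proof. exact: (unsplitK (inl a)). Qed.
Lemma split_r c : split (rgt c) = inr c. Proof. exact: (unsplitK (inr c)). Qed.

Lemma jll a c : jrel (lft a) (lft c) = g a c. Proof. by rewrite /jrel !split_l. Qed.
Lemma jlr a c : jrel (lft a) (rgt c) = true. Proof. by rewrite /jrel split_l split_r. Qed.
Lemma jrl a c : jrel (rgt c) (lft a) = true. Proof. by rewrite /jrel split_l split_r. Qed.
Lemma jrr a c : jrel (rgt a) (rgt c) = fill a c. Proof. by rewrite /jrel !split_r. Qed.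

Lemma lr_ind (P : 'I_(N + b * p) -> Prop) :
  (forall a, P (lft a)) -> (forall c, P (rgt c)) -> forall u, P u.
Proof. by move=> Hl Hr u; rewrite -(splitK u); case: (split u). Qed.

Lemma lft_inj : injective lft. Proof. exact: lshift_inj. Qed.
Lemma rgt_inj : injective rgt. Proof. exact: rshift_inj. Qed.
Lemma lft_rgt a c : (lft a == rgt c) = false.
Proof. by apply/negP => /eqP h; move: (congr1 split h); rewrite split_l split_r. Qed.
Lemma rgt_lft a c : (rgt c == lft a) = false.
Proof. by rewrite eq_sym lft_rgt. Qed.

Lemma card_split (P : pred 'I_(N + b * p)) :
  #|[set u | P u]| = #|[set a | P (lft a)]| + #|[set c | P (rgt c)]|.
Proof.
rewrite -!sum1_card big_split_ord /=.
by congr (_ + _); apply: eq_bigl => x; rewrite !inE.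
Qed.

Lemma jrel_simple : simple_graph g -> simple_graph jrel.
Proof.
move=> [gs gi]; split.
  move=> u v; elim/lr_ind: u; elim/lr_ind: v => x y;
   rewrite ?jll ?jlr ?jrl ?jrr //; try exact: gs.
  by rewrite /fill eq_sym.
elim/lr_ind => x; rewrite ?jll ?jrr //; by rewrite /fill eqxx.
Qed.

Lemma count_blk q : 0 < b ->
  count (fun x => x %/ b == q) (iota 0 (b * p)) = b * (q < p).
Proof.
move=> b0; elim: p => [|m IH]; first by rewrite muln0.
rewrite mulnS addnC iotaD count_cat IH add0n.
have -> : count (fun x => x %/ b == q) (iota (b * m) b) = b * (m == q).
  case: eqP => [<- | mq].
    rewrite muln1 (eq_in_count (a2 := predT)) ?count_predT ?size_iota // => x.
    rewrite mem_iota => /andP [h1 h2] /=; apply/eqP.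
    rewrite -(subnKC h1) mulnC divnMDl // divn_small ?addn0 //.
    by rewrite -(ltn_add2l (m * b)) (mulnC m) subnKC.
  rewrite muln0 (eq_in_count (a2 := pred0)) ?count_pred0 // => x.
  rewrite mem_iota => /andP [h1 h2] /=; apply/eqP => hx; apply: mq.
  rewrite -hx -(subnKC h1) mulnC divnMDl // divn_small ?addn0 //.
  by rewrite -(ltn_add2l (m * b)) (mulnC m) subnKC.
rewrite -mulnDr; congr (b * _).
by case: (ltngtP q m) => [h|h|->]; rewrite ?ltnS ?eqxx ?ltnn ?leqnn //; lia.
Qed.

Lemma fill_deg c : 0 < b -> #|[set c' | fill c c']| = b * p - b.
Proof.
move=> b0.
have -> : [set c' | fill c c'] = ~: [set c' : 'I_(b * p) | c' %/ b == c %/ b].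
  by apply/setP => x; rewrite !inE /fill eq_sym.
rewrite cardsCs setCK card_ord (@cardI _ (fun x => x %/ b == c %/ b)) count_blk //.
have : c %/ b < p by rewrite ltn_divLR //; have := ltn_ord c; lia.
by move=> ->; rewrite muln1.
Qed.

Lemma jrel_regular r : regular r g -> N = r + b -> 0 < b -> regular (r + b * p) jrel.
Proof.
move=> reg Nr b0; elim/lr_ind => x; rewrite /nbhd card_split.
  have -> : [set a | jrel (lft x) (lft a)] = nbhd g x by apply/setP => c; rewrite !inE jll.
  have -> : [set c | jrel (lft x) (rgt c)] = setT by apply/setP => c; rewrite !inE jlr.
  by rewrite reg cardsT card_ord.
have -> : [set a | jrel (rgt x) (lft a)] = setT by apply/setP => c; rewrite !inE jrl.
have -> : [set c | jrel (rgt x) (rgt c)] = [set c | fill x c] by apply/setP => c; rewrite !inE jrr.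
rewrite cardsT card_ord fill_deg // Nr -addnA; congr (_ + _).
rewrite addnC subnK //; case: p x => [|p'] x; first by case: x; rewrite muln0.
by rewrite mulnS leq_addr.
Qed.
Definition lift (B : {set 'I_N}) : {set 'I_(N + b * p)} :=
  [set u | match split u with inl a => a \in B | inr _ => true end].

Lemma in_lift_l B a : (lft a \in lift B) = (a \in B).
Proof. by rewrite inE split_l. Qed.
Lemma in_lift_r B c : (rgt c \in lift B) = true.
Proof. by rewrite inE split_r. Qed.

Lemma card_lift B : #|lift B| = #|B| + b * p.
Proof.
rewrite /lift card_split; congr (_ + _).
  by apply: eq_card => a; rewrite !inE split_l.
by rewrite -[RHS]card_ord -cardsT; apply: eq_card => c; rewrite !inE split_r.
Qed.

Lemma lift_fs B : lift (force_step g B) \subset force_step jrel (lift B).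
Proof.
apply/subsetP; elim/lr_ind => [a | c]; last by rewrite in_lift_r => _; apply: (subsetP (fs_ext _ _)); rewrite in_lift_r.
rewrite in_lift_l !inE => /orP [aB | /existsP [y /andP [yB /andP [gya /forallP H]]]].
  by rewrite split_l aB.
apply/orP; right; apply/existsP; exists (lft y).
rewrite in_lift_l yB jll gya /=; apply/forallP; elim/lr_ind => [x | x].
  rewrite jll in_lift_l (inj_eq lft_inj); exact: H.
by rewrite in_lift_r implybT.
Qed.

Lemma lift_iter B m : lift (iter m (force_step g) B) \subset iter m (force_step jrel) (lift B).
Proof.
elim: m => //= m IH; apply: subset_trans (lift_fs _) _; exact: fs_mono.
Qed.

Lemma lift_setT : lift setT = setT.
Proof. by apply/setP; elim/lr_ind => x; rewrite ?in_lift_l ?in_lift_r !inE. Qed.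

Lemma lift_zf B : zero_forcing_set g B -> zero_forcing_set jrel (lift B).
Proof.
rewrite /zero_forcing_set /zf_closure => /eqP zB.
rewrite eqEsubset subsetT /= -lift_setT -zB.
apply: subset_trans (lift_iter _ _) _; apply: iter_fs_grow.
by rewrite !card_ord leq_addr.
Qed.

Lemma lb_left (C : {set 'I_N}) a z1 z2 :
  (a |: nbhd g a) \subset C -> force_step g C \subset C ->
  z1 != z2 -> z1 \notin C -> z2 \notin C ->
  exists2 B : {set 'I_(N + b * p)}, (lft a |: nbhd jrel (lft a)) \subset B &
    (force_step jrel B \subset B) /\ B != setT.
Proof.
move=> sN fC z12 z1C z2C; exists (lift C); last split.
- apply/subsetP; elim/lr_ind => x; rewrite ?in_lift_l ?in_lift_r // !inE.
  rewrite (inj_eq lft_inj) jll => hx; apply: (subsetP sN); by rewrite !inE.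
- apply/subsetP; elim/lr_ind => z; rewrite ?in_lift_r // in_lift_l.
  case/setUP; first by rewrite in_lift_l.
  rewrite inE => /existsP [u /andP [uB /andP [euz /forallP H]]].
  move: u uB euz H; elim/lr_ind => [y | d]; rewrite ?in_lift_l ?in_lift_r => yC gyz H.
    apply: (subsetP fC); rewrite !inE; apply/orP; right; apply/existsP; exists y.
    rewrite yC -(jll y z) gyz /=; apply/forallP => x; apply/implyP => hx.
    by rewrite -in_lift_l; move/implyP: (H (lft x)); apply; rewrite jll (inj_eq lft_inj).
  apply/negP => zC.
  have h1 := H (lft z1); have h2 := H (lft z2).
  rewrite jrl (inj_eq lft_inj) in_lift_l /= in h1.
  rewrite jrl (inj_eq lft_inj) in_lift_l /= in h2.
  case: (eqVneq z1 z) h1 => [e1 | n1 /= h1]; last by rewrite h1 in z1C.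
  case: (eqVneq z2 z) h2 => [e2 | n2 /= h2]; last by rewrite h2 in z2C.
  by move: z12; rewrite e1 e2 eqxx.
- apply/negP => /eqP h; move: z1C; by rewrite -(in_lift_l C) h inE.
Qed.
Lemma aux_lt q j : q < p -> j < b -> q * b + j < b * p.
Proof.
move=> hq jb; have h1 : q.+1 * b <= p * b by rewrite leq_mul2r hq orbT.
have h2 : q * b + j < q.+1 * b by rewrite mulSn [b + _]addnC ltn_add2l.
by rewrite [b * p]mulnC; exact: leq_trans h2 h1.
Qed.

Lemma mate (c : 'I_(b * p)) j : j < b ->
  exists c2 : 'I_(b * p), (c2 %/ b == c %/ b) && (c2 %% b == j).
Proof.
move=> jb; have b0 : 0 < b by case: b jb.
have hq : c %/ b < p by rewrite ltn_divLR //; have := ltn_ord c; lia.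
have lt : c %/ b * b + j < b * p by apply: aux_lt.
exists (Ordinal lt) => /=; move: (c %/ b) => q.
by rewrite divnMDl // divn_small // addn0 modnMDl modn_small // !eqxx.
Qed.

Lemma lb_right c : 2 < b ->
  exists2 B : {set 'I_(N + b * p)}, (rgt c |: nbhd jrel (rgt c)) \subset B &
    (force_step jrel B \subset B) /\ B != setT.
Proof.
move=> b2.
pose B := [set u : 'I_(N + b * p) | match split u with inl _ => true | inr c' => (c' %/ b != c %/ b) || (c' == c) end].
have inBl a : lft a \in B by rewrite inE split_l.
have inBr c' : (rgt c' \in B) = (c' %/ b != c %/ b) || (c' == c) by rewrite inE split_r.
exists B; last split.
- apply/subsetP; elim/lr_ind => x; rewrite ?inBl // inBr !inE (inj_eq rgt_inj).
  by case/orP => [-> | ]; rewrite ?orbT // jrr /fill eq_sym => ->.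
- apply/subsetP => w; case/setUP => // ; rewrite inE => /existsP [u /andP [uB /andP [euw /forallP H]]].
  move: w euw H; elim/lr_ind => [a | c'] euw H; first by rewrite inBl.
  rewrite inBr; apply/negP => /negP; rewrite negb_or negbK => /andP [/eqP bc' nc'].
  have [j jb /andP [j1 j2]] := third c c' b2.
  have [c2 /andP [/eqP bc2 /eqP mc2]] := mate c jb.
  have c2c : c2 != c by apply/negP => /eqP e; move: j1; rewrite -mc2 e eqxx.
  have c2c' : c2 != c' by apply/negP => /eqP e; move: j2; rewrite -mc2 e eqxx.
  have : rgt c2 \notin B by rewrite inBr bc2 eqxx /= (negbTE c2c).
  move/negP; apply; move/implyP: (H (rgt c2)); apply.
  rewrite (inj_eq rgt_inj) c2c' andbT.
  move: u uB euw {H}; elim/lr_ind => [y | d]; rewrite ?jlr // !jrr /fill bc' bc2 //.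
- have [j jb /andP [j1 _]] := third c c b2.
  have [c2 /andP [/eqP bc2 /eqP mc2]] := mate c jb.
  have c2c : c2 != c by apply/negP => /eqP e; move: j1; rewrite -mc2 e eqxx.
  apply/negP => /eqP h; have : rgt c2 \in B by rewrite h inE.
  by rewrite inBr bc2 eqxx /= (negbTE c2c).
Qed.
End Join.
Import GRing.Theory.
Local Open Scope ring_scope.

Lemma adj_join N b p (g : rel 'I_N) :
  adj_mx (@jrel N b p g) = block_mx (adj_mx g) (const_mx 1) (const_mx 1) (adj_mx (@fill b p)).
Proof.
apply/matrixP; elim/(@lr_ind N b p) => x; elim/(@lr_ind N b p) => y;
 rewrite /adj_mx ?block_mxEul ?block_mxEur ?block_mxEdl ?block_mxEdr !mxE
   ?jll ?jlr ?jrl ?jrr //.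
Qed.

Lemma cosp_sim n (A B P : 'M[int]_n) : P *m A = B *m P -> \det P != 0 ->
  char_poly A = char_poly B.
Proof.
move=> hP dP.
pose P' := map_mx (@polyC int) P.
have e : P' *m char_poly_mx A = char_poly_mx B *m P'.
  rewrite /char_poly_mx mulmxBr mulmxBl -!map_mxM hP.
  by rewrite mul_mx_scalar mul_scalar_mx.
have := congr1 determinant e; rewrite !det_mulmx /P' det_map_mx /= mulrC.
by move/mulIf; apply; rewrite polyC_eq0.
Qed.
Lemma rowsum_const m n k (Q : 'M[int]_(m, n)) s :
  (forall i, \sum_j Q i j = s) -> Q *m (const_mx 1 : 'M_(n, k)) = s *: const_mx 1.
Proof.
by move=> H; apply/matrixP => i j; rewrite !mxE mulr1 -(H i); apply: eq_bigr => l _; rewrite mxE mulr1.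
Qed.

Lemma colsum_const m n k (Q : 'M[int]_(m, n)) s :
  (forall j, \sum_i Q i j = s) -> (const_mx 1 : 'M_(k, m)) *m Q = s *: const_mx 1.
Proof.
by move=> H; apply/matrixP => i j; rewrite !mxE mulr1 -(H j); apply: eq_bigr => l _; rewrite mxE mul1r.
Qed.

Lemma base_pair N r p (g1 g2 : rel 'I_N) (Q : 'M[int]_N) (s : int) (B0 : {set 'I_N}) :
  simple_graph g1 -> simple_graph g2 -> regular r g1 -> regular r g2 -> N = (r + 6)%N ->
  zero_forcing_set g1 B0 -> (#|B0| <= r)%N ->
  (forall a, exists C : {set 'I_N}, exists z1, exists z2,
     [/\ (a |: nbhd g2 a) \subset C, force_step g2 C \subset C, z1 != z2, z1 \notin C & z2 \notin C]) ->
  Q *m adj_mx g1 = adj_mx g2 *m Q ->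
  (forall i, \sum_j Q i j = s) -> (forall j, \sum_i Q i j = s) -> s != 0 -> \det Q != 0 ->
  exists n (e1 e2 : rel 'I_n),
    [/\ simple_graph e1, simple_graph e2,
        regular (r + 6 * p) e1, regular (r + 6 * p) e2 &
        cospectral e1 e2 /\
        zero_forcing_number e1 <> zero_forcing_number e2].
Proof.
move=> s1 s2 r1 r2 Nr zB0 cB0 HC hQ rs cs s0 dQ.
exists (N + 6 * p)%N, (@jrel N 6 p g1), (@jrel N 6 p g2); split.
- exact: jrel_simple.
- exact: jrel_simple.
- exact: jrel_regular.
- exact: jrel_regular.
split.
  rewrite /cospectral !adj_join.
  apply: (@cosp_sim _ _ _ (block_mx Q 0 0 (s%:M))).
    rewrite !mulmx_block !mul0mx !mulmx0 !addr0 !add0r.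
    rewrite hQ (@rowsum_const N N (6 * p) Q s rs) (@colsum_const N N (6 * p) Q s cs).
    by rewrite !mul_scalar_mx !mul_mx_scalar.
  by rewrite det_ublock det_scalar mulf_neq0 // expf_neq0.
apply/eqP; rewrite neq_ltn; apply/orP; left.
apply: (@leq_ltn_trans (r + 6 * p)).
  apply: leq_trans (zfn_le (lift_zf 6 p zB0)) _.
  by rewrite card_lift leq_add2r.
apply: zfn_gt; apply: lb_forcing.
- exact: jrel_simple.
- exact: jrel_regular.
- rewrite card_ord Nr; lia.
- elim/(@lr_ind N 6 p) => [a | c]; last exact: lb_right.
  have [C [z1 [z2 [h1 h2 h3 h4 h5]]]] := HC a.
  exact: lb_left h1 h2 h3 h4 h5.
Qed.
Definition allN N (P : nat -> bool) := all P (iota 0 N).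
Lemma allN_ord N P : allN N P -> forall a : 'I_N, P a.
Proof. by move=> /allP H a; apply: H; rewrite mem_iota ltn_ord. Qed.

Definition gof (L : seq (seq nat)) (i j : nat) : bool := j \in nth [::] L i.
Definition tbl (L : seq (seq nat)) (i j : nat) : nat := nth 0 (nth [::] L i) j.

Definition mxd N (fp fn : nat -> nat -> nat) : 'M[int]_N :=
  \matrix_(i, j) ((fp i j)%:R - (fn i j)%:R).

Definition prodP N (fp fn gp gn : nat -> nat -> nat) i j :=
  sumn [seq fp i l * gp l j + fn i l * gn l j | l <- iota 0 N].
Definition prodN N (fp fn gp gn : nat -> nat -> nat) i j :=
  sumn [seq fp i l * gn l j + fn i l * gp l j | l <- iota 0 N].

Lemma mxd_mul N fp fn gp gn (i j : 'I_N) :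
  (mxd N fp fn *m mxd N gp gn) i j =
  (prodP N fp fn gp gn i j)%:R - (prodN N fp fn gp gn i j)%:R.
Proof.
rewrite !mxE /prodP /prodN -!sumI !natr_sum -sumrB.
apply: eq_bigr => l _; rewrite !mxE !natrD !natrM.
by ring.
Qed.
Lemma natdiff_eq (x y u v : nat) : (x + v = u + y)%N ->
  (x%:R - y%:R = u%:R - v%:R :> int).
Proof. move=> h; rewrite !pmulrn; lia. Qed.

Lemma adj_mxd N (g : nat -> nat -> bool) :
  adj_mx (grel N g) = mxd N (fun i j => nat_of_bool (g i j)) (fun _ _ => 0%N).
Proof. by apply/matrixP => i j; rewrite !mxE subr0. Qed.

Lemma mxd_eq N fp fn gp gn :
  allN N (fun i => allN N (fun j => fp i j + gn i j == gp i j + fn i j)) ->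
  mxd N fp fn = mxd N gp gn.
Proof.
move=> H; apply/matrixP => i j; rewrite !mxE; apply: natdiff_eq.
by apply/eqP; exact: (allN_ord (allN_ord H i) j).
Qed.
Lemma mxd_mulE N fp fn gp gn :
  mxd N fp fn *m mxd N gp gn = mxd N (prodP N fp fn gp gn) (prodN N fp fn gp gn).
Proof. by apply/matrixP => i j; rewrite mxd_mul mxE. Qed.

Local Close Scope ring_scope.
Definition nbv N (g : nat -> nat -> bool) a := [seq (x == a) || g a x | x <- iota 0 N].

Definition simple_chk N (g : nat -> nat -> bool) :=
  allN N (fun i => allN N (fun j => g i j == g j i)) && allN N (fun i => ~~ g i i).

Definition basecheck (N r : nat) (G1 G2 : seq (seq nat)) (b0 : seq bool)
   (w1 w2 : seq nat) (QP QN : seq (seq nat)) : bool :=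
  let g1 := gof G1 in let g2 := gof G2 in
  let a1 := fun i j => nat_of_bool (g1 i j) in
  let a2 := fun i j => nat_of_bool (g2 i j) in
  let z := fun _ _ : nat => 0%N in
  let qp := tbl QP in let qn := tbl QN in
  [&& N == r + 6, simple_chk N g1, simple_chk N g2,
   allN N (fun i => count (g1 i) (iota 0 N) == r),
   allN N (fun i => count (g2 i) (iota 0 N) == r),
   allN N (fun x => nth false (iter N (fsb N g1) b0) x),
   count (nth false b0) (iota 0 N) <= r,
   allN N (fun a => let C := iter N (fsb N g2) (nbv N g2 a) in
      [&& allN N (fun x => ((x == a) || g2 a x) ==> nth false C x),
          fsb N g2 C == C, nth 0 w1 a < N, nth 0 w2 a < N,
          nth 0 w1 a != nth 0 w2 a, ~~ nth false C (nth 0 w1 a) &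
          ~~ nth false C (nth 0 w2 a)]),
   allN N (fun i => allN N (fun j =>
      prodP N qp qn a1 z i j + prodN N a2 z qp qn i j ==
      prodP N a2 z qp qn i j + prodN N qp qn a1 z i j)),
   allN N (fun i => sumn [seq qp i l | l <- iota 0 N] == 2 + sumn [seq qn i l | l <- iota 0 N]),
   allN N (fun j => sumn [seq qp l j | l <- iota 0 N] == 2 + sumn [seq qn l j | l <- iota 0 N]) &
   allN N (fun i => allN N (fun j =>
      prodP N (fun i j => qp j i) (fun i j => qn j i) qp qn i j + 0 ==
      4 * (i == j) + prodN N (fun i j => qp j i) (fun i j => qn j i) qp qn i j))].

Lemma simple_chk_ok N g : simple_chk N g -> simple_graph (grel N g).
Proof.
case/andP => hs hi; split => [a c | a]; rewrite /grel.
  by apply/eqP; exact: (allN_ord (allN_ord hs a) c).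
by apply/negbTE; exact: (allN_ord hi a).
Qed.

Lemma reg_chk_ok N r g : allN N (fun i => count (g i) (iota 0 N) == r) -> regular r (grel N g).
Proof.
move=> H a; rewrite /nbhd /grel (@cardI N (g a)).
by apply/eqP; exact: (allN_ord H a).
Qed.
Lemma basecheck_ok N r G1 G2 b0 w1 w2 QP QN p :
  basecheck N r G1 G2 b0 w1 w2 QP QN = true ->
  exists n (e1 e2 : rel 'I_n),
    [/\ simple_graph e1, simple_graph e2,
        regular (r + 6 * p) e1, regular (r + 6 * p) e2 &
        cospectral e1 e2 /\
        zero_forcing_number e1 <> zero_forcing_number e2].
Proof.
rewrite /basecheck => /andP [/eqP Nr /andP [s1 /andP [s2 /andP [r1 /andP [r2 /andP [zf /andP [cb /andP [HC /andP [hQ /andP [rs /andP [cs qq]]]]]]]]]]].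
apply: (@base_pair N r p (grel N (gof G1)) (grel N (gof G2))
          (mxd N (tbl QP) (tbl QN)) 2%:R%R (toset N b0)).
- exact: simple_chk_ok.
- exact: simple_chk_ok.
- exact: reg_chk_ok.
- exact: reg_chk_ok.
- exact: Nr.
- rewrite /zero_forcing_set /zf_closure card_ord iter_fsb; apply/eqP/setP => x.
  by rewrite !inE; exact: (allN_ord zf x).
- by rewrite /toset (@cardI N (nth false b0)).
- move=> a; have /and4P [h1 h2 h3 /and4P [h4 h5 h6 h7]] := allN_ord HC a.
  exists (toset N (iter N (fsb N (gof G2)) (nbv N (gof G2) a))).
  exists (Ordinal h3), (Ordinal h4); split.
  + apply/subsetP => x; rewrite !inE => hx.
    by move/implyP: (allN_ord h1 x); apply; rewrite /grel in hx; rewrite -(inj_eq val_inj) in hx.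
  + by rewrite fsb_ok (eqP h2).
  + exact: h5.
  + by rewrite inE.
  + by rewrite inE.
- rewrite !adj_mxd !mxd_mulE; apply: mxd_eq; exact: hQ.
- move=> i; under eq_bigr do rewrite mxE.
  rewrite sumrB -!natr_sum !sumI -[2%:R%R]subr0; apply: (natdiff_eq (u := 2) (v := 0)).
  by rewrite addn0; apply/eqP; exact: (allN_ord rs i).
- move=> j; under eq_bigr do rewrite mxE.
  rewrite sumrB -!natr_sum (@sumI N (fun l => tbl QP l j)) (@sumI N (fun l => tbl QN l j)) -[2%:R%R]subr0; apply: (natdiff_eq (u := 2) (v := 0)).
  by rewrite addn0; apply/eqP; exact: (allN_ord cs j).
- by [].
- set Q := mxd N (tbl QP) (tbl QN).
  have hT : (Q^T)%R = mxd N (fun i j => tbl QP j i) (fun i j => tbl QN j i).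
    by apply/matrixP => i j; rewrite !mxE.
  have h4 : (Q^T *m Q = 4%:M)%R.
    rewrite hT mxd_mulE (mxd_eq (gp := fun i j => 4 * (i == j)) (gn := fun _ _ => 0)) //.
    by apply/matrixP => i j; rewrite !mxE subr0 natrM mulr_natr.
  have := congr1 determinant h4; rewrite det_mulmx det_tr det_scalar => e.
  apply/negP => /eqP d0; move: e; rewrite d0 mul0r => /esym /eqP.
  by rewrite expf_eq0 andbF.
Qed.
Definition d10_N := 10%N.
Definition d10_r := 4%N.
Definition d10_g1 := [:: [:: 3; 6; 7; 8]; [:: 2; 4; 6; 9]; [:: 1; 3; 4; 7]; [:: 0; 2; 4; 7]; [:: 1; 2; 3; 5]; [:: 4; 6; 8; 9]; [:: 0; 1; 5; 8]; [:: 0; 2; 3; 9]; [:: 0; 5; 6; 9]; [:: 1; 5; 7; 8]].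
Definition d10_g2 := [:: [:: 1; 5; 7; 9]; [:: 0; 2; 8; 9]; [:: 1; 4; 6; 8]; [:: 5; 6; 7; 8]; [:: 2; 5; 7; 9]; [:: 0; 3; 4; 7]; [:: 2; 3; 8; 9]; [:: 0; 3; 4; 5]; [:: 1; 2; 3; 6]; [:: 0; 1; 4; 6]].
Definition d10_b0 := [:: true; true; false; false; false; true; true; false; false; false].
Definition d10_w1 := [:: 2; 3; 5; 0; 0; 1; 5; 1; 5; 2].
Definition d10_w2 := [:: 3; 4; 7; 1; 1; 2; 7; 2; 7; 3].
Definition d10_qp := [:: [:: 0; 0; 1; 0; 0; 1; 1; 0; 0; 0]; [:: 0; 0; 0; 0; 2; 0; 0; 0; 0; 0]; [:: 0; 0; 1; 0; 0; 1; 0; 1; 0; 0]; [:: 2; 0; 0; 0; 0; 0; 0; 0; 0; 0]; [:: 0; 0; 0; 0; 0; 0; 0; 0; 0; 2]; [:: 0; 0; 0; 0; 0; 0; 0; 0; 2; 0]; [:: 0; 0; 1; 0; 0; 0; 1; 1; 0; 0]; [:: 0; 0; 0; 0; 0; 1; 1; 1; 0; 0]; [:: 0; 0; 0; 2; 0; 0; 0; 0; 0; 0]; [:: 0; 2; 0; 0; 0; 0; 0; 0; 0; 0]].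
Definition d10_qn := [:: [:: 0; 0; 0; 0; 0; 0; 0; 1; 0; 0]; [:: 0; 0; 0; 0; 0; 0; 0; 0; 0; 0]; [:: 0; 0; 0; 0; 0; 0; 1; 0; 0; 0]; [:: 0; 0; 0; 0; 0; 0; 0; 0; 0; 0]; [:: 0; 0; 0; 0; 0; 0; 0; 0; 0; 0]; [:: 0; 0; 0; 0; 0; 0; 0; 0; 0; 0]; [:: 0; 0; 0; 0; 0; 1; 0; 0; 0; 0]; [:: 0; 0; 1; 0; 0; 0; 0; 0; 0; 0]; [:: 0; 0; 0; 0; 0; 0; 0; 0; 0; 0]; [:: 0; 0; 0; 0; 0; 0; 0; 0; 0; 0]].

Definition d12_N := 12%N.
Definition d12_r := 6%N.
Definition d12_g1 := [:: [:: 3; 5; 6; 8; 10; 11]; [:: 2; 3; 8; 9; 10; 11]; [:: 1; 3; 6; 7; 9; 10]; [:: 0; 1; 2; 6; 7; 11]; [:: 5; 6; 7; 8; 9; 11]; [:: 0; 4; 7; 8; 10; 11]; [:: 0; 2; 3; 4; 8; 9]; [:: 2; 3; 4; 5; 9; 10]; [:: 0; 1; 4; 5; 6; 11]; [:: 1; 2; 4; 6; 7; 10]; [:: 0; 1; 2; 5; 7; 9]; [:: 0; 1; 3; 4; 5; 8]].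
Definition d12_g2 := [:: [:: 1; 5; 7; 8; 9; 11]; [:: 0; 2; 3; 4; 7; 9]; [:: 1; 4; 6; 7; 8; 10]; [:: 1; 4; 5; 8; 9; 11]; [:: 1; 2; 3; 5; 7; 10]; [:: 0; 3; 4; 8; 10; 11]; [:: 2; 7; 8; 9; 10; 11]; [:: 0; 1; 2; 4; 6; 10]; [:: 0; 2; 3; 5; 6; 11]; [:: 0; 1; 3; 6; 10; 11]; [:: 2; 4; 5; 6; 7; 9]; [:: 0; 3; 5; 6; 8; 9]].
Definition d12_b0 := [:: true; true; false; true; true; true; false; false; false; false; false; true].
Definition d12_w1 := [:: 2; 5; 3; 0; 0; 1; 0; 3; 1; 2; 0; 1].
Definition d12_w2 := [:: 3; 6; 5; 2; 6; 2; 1; 5; 4; 4; 1; 4].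
Definition d12_qp := [:: [:: 0; 1; 0; 0; 0; 0; 1; 0; 0; 1; 0; 0]; [:: 0; 0; 0; 0; 2; 0; 0; 0; 0; 0; 0; 0]; [:: 0; 0; 0; 0; 0; 0; 0; 0; 0; 0; 0; 2]; [:: 0; 0; 0; 0; 0; 0; 0; 2; 0; 0; 0; 0]; [:: 0; 0; 0; 0; 0; 2; 0; 0; 0; 0; 0; 0]; [:: 0; 0; 0; 0; 0; 0; 0; 0; 0; 0; 2; 0]; [:: 0; 1; 0; 1; 0; 0; 1; 0; 0; 0; 0; 0]; [:: 0; 0; 0; 0; 0; 0; 0; 0; 2; 0; 0; 0]; [:: 0; 1; 0; 1; 0; 0; 0; 0; 0; 1; 0; 0]; [:: 0; 0; 0; 1; 0; 0; 1; 0; 0; 1; 0; 0]; [:: 2; 0; 0; 0; 0; 0; 0; 0; 0; 0; 0; 0]; [:: 0; 0; 2; 0; 0; 0; 0; 0; 0; 0; 0; 0]].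
Definition d12_qn := [:: [:: 0; 0; 0; 1; 0; 0; 0; 0; 0; 0; 0; 0]; [:: 0; 0; 0; 0; 0; 0; 0; 0; 0; 0; 0; 0]; [:: 0; 0; 0; 0; 0; 0; 0; 0; 0; 0; 0; 0]; [:: 0; 0; 0; 0; 0; 0; 0; 0; 0; 0; 0; 0]; [:: 0; 0; 0; 0; 0; 0; 0; 0; 0; 0; 0; 0]; [:: 0; 0; 0; 0; 0; 0; 0; 0; 0; 0; 0; 0]; [:: 0; 0; 0; 0; 0; 0; 0; 0; 0; 1; 0; 0]; [:: 0; 0; 0; 0; 0; 0; 0; 0; 0; 0; 0; 0]; [:: 0; 0; 0; 0; 0; 0; 1; 0; 0; 0; 0; 0]; [:: 0; 1; 0; 0; 0; 0; 0; 0; 0; 0; 0; 0]; [:: 0; 0; 0; 0; 0; 0; 0; 0; 0; 0; 0; 0]; [:: 0; 0; 0; 0; 0; 0; 0; 0; 0; 0; 0; 0]].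

Definition d14_N := 14%N.
Definition d14_r := 8%N.
Definition d14_g1 := [:: [:: 2; 3; 4; 6; 7; 8; 12; 13]; [:: 2; 3; 4; 5; 7; 9; 10; 13]; [:: 0; 1; 3; 5; 9; 10; 11; 12]; [:: 0; 1; 2; 4; 6; 9; 10; 11]; [:: 0; 1; 3; 5; 6; 7; 8; 11]; [:: 1; 2; 4; 6; 7; 9; 11; 12]; [:: 0; 3; 4; 5; 8; 9; 12; 13]; [:: 0; 1; 4; 5; 8; 10; 12; 13]; [:: 0; 4; 6; 7; 10; 11; 12; 13]; [:: 1; 2; 3; 5; 6; 10; 11; 12]; [:: 1; 2; 3; 7; 8; 9; 11; 13]; [:: 2; 3; 4; 5; 8; 9; 10; 13]; [:: 0; 2; 5; 6; 7; 8; 9; 13]; [:: 0; 1; 6; 7; 8; 10; 11; 12]].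
Definition d14_g2 := [:: [:: 1; 6; 7; 8; 10; 11; 12; 13]; [:: 0; 3; 4; 5; 7; 8; 10; 13]; [:: 3; 4; 5; 7; 9; 10; 11; 12]; [:: 1; 2; 4; 8; 9; 10; 12; 13]; [:: 1; 2; 3; 6; 9; 11; 12; 13]; [:: 1; 2; 6; 7; 8; 9; 11; 13]; [:: 0; 4; 5; 8; 9; 10; 11; 12]; [:: 0; 1; 2; 5; 8; 11; 12; 13]; [:: 0; 1; 3; 5; 6; 7; 9; 13]; [:: 2; 3; 4; 5; 6; 8; 10; 12]; [:: 0; 1; 2; 3; 6; 9; 11; 12]; [:: 0; 2; 4; 5; 6; 7; 10; 13]; [:: 0; 2; 3; 4; 6; 7; 9; 10]; [:: 0; 1; 3; 4; 5; 7; 8; 11]].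
Definition d14_b0 := [:: true; true; true; true; false; true; false; false; false; true; true; true; false; false].
Definition d14_w1 := [:: 2; 2; 0; 0; 0; 0; 1; 3; 2; 0; 4; 1; 1; 2].
Definition d14_w2 := [:: 3; 6; 1; 5; 5; 3; 2; 4; 4; 1; 5; 3; 5; 6].
Definition d14_qp := [:: [:: 0; 0; 0; 0; 0; 0; 0; 0; 0; 0; 0; 0; 2; 0]; [:: 0; 0; 0; 0; 0; 0; 0; 0; 0; 0; 0; 0; 0; 2]; [:: 0; 0; 0; 2; 0; 0; 0; 0; 0; 0; 0; 0; 0; 0]; [:: 0; 0; 0; 0; 0; 0; 0; 0; 0; 0; 2; 0; 0; 0]; [:: 0; 0; 0; 0; 0; 0; 0; 0; 0; 0; 0; 2; 0; 0]; [:: 0; 1; 0; 0; 1; 0; 1; 0; 0; 0; 0; 0; 0; 0]; [:: 0; 0; 0; 0; 0; 2; 0; 0; 0; 0; 0; 0; 0; 0]; [:: 2; 0; 0; 0; 0; 0; 0; 0; 0; 0; 0; 0; 0; 0]; [:: 0; 0; 0; 0; 0; 0; 0; 2; 0; 0; 0; 0; 0; 0]; [:: 0; 1; 0; 0; 1; 0; 0; 0; 0; 1; 0; 0; 0; 0]; [:: 0; 1; 0; 0; 0; 0; 1; 0; 0; 1; 0; 0; 0; 0]; [:: 0; 0; 0; 0; 1; 0; 1; 0; 0; 1; 0; 0; 0; 0]; [:: 0; 0; 2; 0; 0; 0; 0; 0; 0; 0; 0; 0; 0; 0]; [:: 0; 0; 0; 0; 0; 0; 0; 0; 2; 0; 0;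 0; 0; 0]].
Definition d14_qn := [:: [:: 0; 0; 0; 0; 0; 0; 0; 0; 0; 0; 0; 0; 0; 0]; [:: 0; 0; 0; 0; 0; 0; 0; 0; 0; 0; 0; 0; 0; 0]; [:: 0; 0; 0; 0; 0; 0; 0; 0; 0; 0; 0; 0; 0; 0]; [:: 0; 0; 0; 0; 0; 0; 0; 0; 0; 0; 0; 0; 0; 0]; [:: 0; 0; 0; 0; 0; 0; 0; 0; 0; 0; 0; 0; 0; 0]; [:: 0; 0; 0; 0; 0; 0; 0; 0; 0; 1; 0; 0; 0; 0]; [:: 0; 0; 0; 0; 0; 0; 0; 0; 0; 0; 0; 0; 0; 0]; [:: 0; 0; 0; 0; 0; 0; 0; 0; 0; 0; 0; 0; 0; 0]; [:: 0; 0; 0; 0; 0; 0; 0; 0; 0; 0; 0; 0; 0; 0]; [:: 0; 0; 0; 0; 0; 0; 1; 0; 0; 0; 0; 0; 0; 0]; [:: 0; 0; 0; 0; 1; 0; 0; 0; 0; 0; 0; 0; 0; 0]; [:: 0; 1; 0; 0; 0; 0; 0; 0; 0; 0; 0; 0; 0; 0]; [:: 0; 0; 0; 0; 0; 0; 0; 0; 0; 0; 0; 0; 0; 0]; [:: 0; 0; 0; 0; 0; 0; 0; 0; 0; 0; 0; 0; 0; 0]].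

Lemma chk10 : basecheck d10_N d10_r d10_g1 d10_g2 d10_b0 d10_w1 d10_w2 d10_qp d10_qn = true.
Proof. vm_compute. reflexivity. Qed.
Lemma chk12 : basecheck d12_N d12_r d12_g1 d12_g2 d12_b0 d12_w1 d12_w2 d12_qp d12_qn = true.
Proof. vm_compute. reflexivity. Qed.
Lemma chk14 : basecheck d14_N d14_r d14_g1 d14_g2 d14_b0 d14_w1 d14_w2 d14_qp d14_qn = true.
Proof. vm_compute. reflexivity. Qed.
Local Close Scope ring_scope.

Theorem theorem5p3 (k : nat) : 2 <= k ->
  exists (n : nat) (e1 e2 : rel 'I_n),
    [/\ simple_graph e1, simple_graph e2,
        regular (2 * k) e1, regular (2 * k) e2 &
        cospectral e1 e2 /\
        zero_forcing_number e1 <> zero_forcing_number e2].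
Proof.
move=> k2.
have hk := divn_eq k 3; have := ltn_pmod k (isT : 0 < 3).
case Hm: (k %% 3) => [|[|[|?]]] // _.
- have -> : 2 * k = d12_r + 6 * (k %/ 3 - 1) by rewrite /d12_r; lia.
  exact: basecheck_ok chk12.
- have -> : 2 * k = d14_r + 6 * (k %/ 3 - 1) by rewrite /d14_r; lia.
  exact: basecheck_ok chk14.
- have -> : 2 * k = d10_r + 6 * (k %/ 3) by rewrite /d10_r; lia.
  exact: basecheck_ok chk10.
Qed.
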